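(* Let $\alpha,\beta\in\mathbb{R}$ satisfy $4<\alpha^2<6$ and $\frac{4}{100}<\beta<\frac{165}{100}$, and let $q_{\alpha,\beta}(w)=w^4+\alpha w^3+(\beta-4)w^2-\alpha w+3$ for $w\in\mathbb{C}$. Then $q_{\alpha,\beta}$ has precisely $1$ root in $\{w\in\mathbb{C}:|w|<1,\ \mathrm{Im}(w)<0\}$, which is simple, precisely $1$ root in $\{w\in\mathbb{C}:|w|<1,\ \mathrm{Im}(w)>0\}$, which is simple, and $2$ different simple roots in $\mathbb{R}\setminus[-1,1]$. In particular, $q_{\alpha,\beta}$ has no roots on the unit circle $S^1$ or on $[-1,1]$. *)

(* Defs.v *)
From HB Require Import structures.
From mathcomp Require Import all_boot all_order all_algebra.
From mathcomp Require Export complex.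
Set Implicit Arguments. Unset Strict Implicit. Unset Printing Implicit Defensive.
Import Order.TTheory GRing.Theory Num.Theory.
Local Open Scope ring_scope.
Local Open Scope complex_scope.

Definition q_ab (R : rcfType) (a b : R) : {poly R[i]} :=
  'X^4 + (a%:C)%:P * 'X^3 + ((b - 4)%:C)%:P * 'X^2 - (a%:C)%:P * 'X + 3%:P.

Definition simple_root (R : rcfType) (p : {poly R[i]}) (w : R[i]) : Prop :=
  mup w p = 1%N.

(* Main.v *)
Require Import Defs.
From HB Require Import structures.
From mathcomp Require Import all_boot all_order all_algebra.
From mathcomp Require Import complex.
From mathcomp Require Import ring lra.
Set Implicit Arguments. Unset Strict Implicit.
Import Order.TTheory GRing.Theory Num.Theory.
Local Open Scope ring_scope.
Local Open Scope complex_scope.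

Lemma quart (R : realFieldType) (v : R) : 0 <= v <= 1 ->
  0 < 1/25 - 49/50 * v + 939/100 * v^+2 - 129/20 * v^+3 + v^+4.
Proof.
move=> /andP[h0 h1].
have h4 : 0 <= v^+4 by rewrite exprn_ge0.
have [hv|hv] := lerP v (1/2).
  have H1 : 0 <= v^+2 * (1/2 - v) by rewrite mulr_ge0 ?sqr_ge0 // subr_ge0.
  have H2 : 0 <= (v - 49/616)^+2 by rewrite sqr_ge0.
  have e1 : v^+3 = v^+2 * v by rewrite exprS mulrC.
  rewrite e1; nra.
have H1 : 0 <= v^+2 * (1 - v) by rewrite mulr_ge0 ?sqr_ge0 // subr_ge0.
have H2 : 0 <= v * (v - 1/2) by rewrite mulr_ge0 // subr_ge0 ltW.
have e1 : v^+3 = v^+2 * v by rewrite exprS mulrC.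
rewrite e1; nra.
Qed.

Definition fR (R : realFieldType) (a b x : R) := x^+4 + a * x^+3 + (b - 4) * x^+2 - a * x + 3.

Lemma pos_unit (R : realFieldType) (a b x : R) : a^+2 < 6 -> 4/100 < b -> -1 <= x <= 1 -> 0 < fR a b x.
Proof.
move=> ha hb hx.
have ht : `|x| <= 1 by rewrite ler_norml.
have hA : `|a| < 49/20.
  have : `|a|^+2 < (49/20)^+2 by rewrite real_normK ?num_real //; lra.
  by rewrite ltr_pXn2r // ?nnegrE //; lra.
have hax : a * x <= `|a| * `|x| by rewrite -normrM ler_norm.
have hx2 : x^+2 = `|x|^+2 by rewrite real_normK ?num_real.
set t := `|x| in ht hax hx2.
have t0 : 0 <= t by rewrite normr_ge0.
have := quart (v := 1 - t); rewrite subr_ge0 ht /= gerBl t0 => /(_ isT) hq.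
have e : fR a b x = (1 - t^+2)*(3 - t^+2 - a*x) + b * t^+2.
  by rewrite /fR -hx2; ring.
have e2 : 1/25 - 49/50 * (1-t) + 939/100 * (1-t)^+2 - 129/20 * (1-t)^+3 + (1-t)^+4
   = (1 - t^+2)*(3 - t^+2 - 49/20 * t) + 1/25 * t^+2 by field.
rewrite e2 in hq; rewrite e.
have h1 : 0 <= 1 - t^+2 by rewrite subr_ge0 expr_le1.
have h2 : (1 - t^+2) * (3 - t^+2 - 49/20 * t) <= (1 - t^+2)*(3 - t^+2 - a*x).
  rewrite ler_wpM2l //; nra.
have h3 : 1/25 * t^+2 <= b * t^+2 by rewrite ler_wpM2r ?sqr_ge0 //; lra.
lra.
Qed.
Definition pf (R : realFieldType) (a b : R) : {poly R} :=
  'X^4 + a%:P * 'X^3 + (b - 4)%:P * 'X^2 - a%:P * 'X + 3%:P.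

Lemma pfE (R : realFieldType) (a b x : R) : (pf a b).[x] = fR a b x.
Proof. by rewrite /pf /fR !hornerE. Qed.

Lemma ivt_root (R : rcfType) (p : {poly R}) (l r : R) : l <= r ->
  p.[l] < 0 -> 0 < p.[r] -> exists2 x, l < x < r & root p x.
Proof.
move=> lr hl hr.
have [x /andP[x1 x2] rx] := @poly_ivt _ p _ _ lr (introT andP (conj (ltW hl) (ltW hr))).
exists x => //.
move/eqP: rx => rx.
apply/andP; split; rewrite lt_neqAle ?x1 ?x2 andbT.
  by apply/eqP => e; move: hl; rewrite e rx ltxx.
by apply/eqP => e; move: hr; rewrite -e rx ltxx.
Qed.

Lemma roots_pos (R : rcfType) (A b : R) : 2 < A -> A^+2 < 6 -> 4/100 < b < 165/100 ->
  exists y1 y2 : R, [/\ 1 < y2, y2 < 2, 2 < y1, fR (-A) b y1 = 0 & fR (-A) b y2 = 0 /\ 3 < y1 * y2].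
Proof.
move=> hA2 hA6 /andP[hb1 hb2].
have hA : A < 49/20 by nra.
have [y2 /andP[y21 y22] r2] : exists2 y2, 1 < y2 < 2 & root (- pf (-A) b) y2.
  apply: ivt_root; rewrite ?hornerN ?pfE /fR; lra.
move: r2; rewrite rootN /root pfE => /eqP r2.
pose m := Num.max 2 (3 / y2).
have y20 : 0 < y2 by lra.
have hm : fR (-A) b m < 0.
  rewrite /m; case: (leP 2 (3/y2)) => h.
    set z := 3 / y2.
    have zy : z * y2 = 3 by rewrite /z mulfVK // gt_eqF.
    have e : fR (-A) b z * y2^+4 = 9 * fR (-A) b y2 - 6 * (y2^+2 - 3) * (y2^+2 - 2*A*y2 + 3).
      rewrite /z /fR; field; by rewrite gt_eqF.
    rewrite r2 mulr0 add0r in e.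
    have hy : y2 <= 3/2.
      have : 2 * y2 <= 3/y2 * y2 by rewrite ler_wpM2r // ltW.
      rewrite mulfVK ?gt_eqF //; lra.
    have h1 : y2^+2 - 3 < 0 by nra.
    have h2 : y2^+2 - 2*A*y2 + 3 < 0.
      have k1 : 0 < (A - 2) * y2 by rewrite mulr_gt0 // subr_gt0.
      have k2 : 0 < (y2 - 1) * (3 - y2) by rewrite mulr_gt0 // subr_gt0; lra.
      nra.
    have h3 : 0 < y2^+4 by rewrite exprn_gt0.
    have : fR (-A) b z * y2^+4 < 0 by rewrite e; nra.
    by rewrite pmulr_llt0.
  rewrite /fR; nra.
have [y1 /andP[y11 y12] r1] : exists2 y1, m < y1 < 5 & root (pf (-A) b) y1.
  apply: ivt_root; rewrite ?pfE //.
    have h3y : 3 / y2 <= 3 by rewrite ler_pdivrMr //; nra.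
    rewrite /m; case: (leP 2 (3/y2)) => h; lra.
  rewrite /fR; nra.
move: r1; rewrite /root pfE => /eqP r1.
have hm2 : 2 <= m by rewrite /m le_max lexx.
have hm3 : 3 / y2 <= m by rewrite /m le_max lexx orbT.
exists y1, y2; split => //; first lra.
split => //.
have : 3 / y2 * y2 < y1 * y2 by rewrite ltr_pM2r //; lra.
by rewrite mulfVK ?gt_eqF.
Qed.
Lemma roots_real (R : rcfType) (a b : R) : 4 < a^+2 < 6 -> 4/100 < b < 165/100 ->
  exists x1 x2 : R, [/\ x1 != x2, 1 < `|x1|, 1 < `|x2|, fR a b x1 = 0 & fR a b x2 = 0 /\ 3 < x1 * x2].
Proof.
move=> /andP[ha1 ha2] hb.
have [ap|an] := ltrP 0 a.
  have a2 : 2 < a by nra.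
  have [y1 [y2 [h1 h2 h3 h4 [h5 h6]]]] := roots_pos a2 ha2 hb.
  exists (-y1), (-y2); split.
  - by rewrite eqr_opp; apply/eqP => e; lra.
  - rewrite normrN gtr0_norm; lra.
  - rewrite normrN gtr0_norm; lra.
  - by rewrite -h4 /fR; ring.
  - by split; [rewrite -h5 /fR; ring | rewrite mulrNN].
have a2 : 2 < - a by nra.
have ha2' : (-a)^+2 < 6 by rewrite sqrrN.
have [y1 [y2 [h1 h2 h3 h4 [h5 h6]]]] := roots_pos a2 ha2' hb.
rewrite opprK in h4 h5.
exists y1, y2; split => //.
- by apply/eqP => e; lra.
- rewrite gtr0_norm; lra.
- rewrite gtr0_norm; lra.
Qed.

Lemma relations (R : realFieldType) (a b x1 x2 c0 : R) : x1 != x2 -> x1 != 0 -> x2 != 0 ->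
  fR a b x1 = 0 -> fR a b x2 = 0 -> x1 * x2 * c0 = 3 ->
  forall x, fR a b x = (x - x1) * (x - x2) * (x^+2 + (a + x1 + x2) * x + c0).
Proof.
move=> n12 n1 n2 f1 f2 hc x.
set c1 := a + x1 + x2.
pose d2 := c0 - (x1 + x2) * c1 + x1 * x2 - (b - 4).
pose d1 := x1 * x2 * c1 - (x1 + x2) * c0 + a.
have key : forall y, (y - x1) * (y - x2) * (y^+2 + c1 * y + c0) - fR a b y = d2 * y^+2 + d1 * y + (x1 * x2 * c0 - 3).
  by move=> y; rewrite /d2 /d1 /c1 /fR; ring.
have k1 := key x1; have k2 := key x2.
rewrite f1 hc !subrr ?mulr0 ?mul0r ?subr0 ?addr0 in k1.
rewrite f2 hc !subrr ?mulr0 ?mul0r ?subr0 ?addr0 in k2.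
have e1 : d2 * x1 + d1 = 0.
  apply/(mulIf n1); rewrite mul0r mulrDl -mulrA -expr2 -k1; by [].
have e2 : d2 * x2 + d1 = 0.
  apply/(mulIf n2); rewrite mul0r mulrDl -mulrA -expr2 -k2; by [].
have hd2 : d2 = 0.
  have : d2 * (x1 - x2) = 0 by rewrite mulrBr; lra.
  move/eqP; rewrite mulf_eq0 => /orP[/eqP //|].
  by rewrite subr_eq0 (negPf n12).
have hd1 : d1 = 0 by move: e1; rewrite hd2 mul0r add0r.
apply/eqP; rewrite -subr_eq0; apply/eqP.
have := key x; rewrite hd2 hd1 hc subrr !mul0r !addr0.
by move=> h; rewrite -opprB h oppr0.
Qed.
Lemma disc (R : rcfType) (a b x1 x2 c0 : R) : a^+2 < 6 -> 4/100 < b ->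
  x1 != x2 -> x1 != 0 -> x2 != 0 ->
  fR a b x1 = 0 -> fR a b x2 = 0 -> x1 * x2 * c0 = 3 -> 0 < c0 < 1 ->
  (a + x1 + x2)^+2 < 4 * c0.
Proof.
move=> ha hb n12 n1 n2 f1 f2 hc /andP[c00 c01].
have rel := relations n12 n1 n2 f1 f2 hc.
set c1 := a + x1 + x2 in rel *.
rewrite ltNge; apply/negP => hd.
pose r := (- c1 + Num.sqrt (c1^+2 - 4 * c0)) / 2.
have sq : Num.sqrt (c1^+2 - 4 * c0) ^+2 = c1^+2 - 4 * c0 by rewrite sqr_sqrtr // subr_ge0.
have gr : r^+2 + c1 * r + c0 = 0.
  rewrite /r; set s := Num.sqrt _ in sq *.
  have -> : ((- c1 + s) / 2)^+2 + c1 * ((- c1 + s) / 2) + c0 = (s^+2 - (c1^+2 - 4 * c0)) / 4 by field.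
  by rewrite sq subrr mul0r.
pose r' := - c1 - r.
have gr' : r'^+2 + c1 * r' + c0 = 0 by rewrite -gr /r'; ring.
have big : forall y, y^+2 + c1 * y + c0 = 0 -> 1 < `|y|.
  move=> y gy; rewrite ltNge; apply/negP => hy.
  have : 0 < fR a b y by apply: pos_unit => //; rewrite -ler_norml.
  by rewrite rel gy mulr0 ltxx.
have h1 := big _ gr; have h2 := big _ gr'.
have prod : r * r' = c0 by rewrite /r'; lra.
have : 1 < `|r * r'| by rewrite normrM; nra.
rewrite prod gtr0_norm //; lra.
Qed.
Lemma normC_real (R : rcfType) (x : R) : `|x%:C| = `|x|%:C.
Proof. by rewrite normc_def /= expr0n /= addr0 sqrtr_sqr. Qed.

Lemma normC_pair (R : rcfType) (u v : R) : `|u +i* v| = (Num.sqrt (u^+2 + v^+2))%:C.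
Proof. by rewrite normc_def. Qed.

Lemma poly_fact (R : rcfType) (a b x1 x2 c1 c0 : R) (wp wm : R[i])
  (R2 : b - 4 = c0 - (x1 + x2) * c1 + x1 * x2)
  (R3 : - a = x1 * x2 * c1 - (x1 + x2) * c0)
  (R1 : a = c1 - x1 - x2) (hc : x1 * x2 * c0 = 3)
  (hs : wp + wm = - c1%:C) (hp : wp * wm = c0%:C) :
  q_ab a b = \prod_(y <- [:: x1%:C; x2%:C; wp; wm]) ('X - y%:P).
Proof.
rewrite !big_cons big_nil mulr1.
have e1 : ('X - wp%:P) * ('X - wm%:P) = 'X^2 + (c1%:C)%:P * 'X + (c0%:C)%:P.
  rewrite -[c1%:C]opprK -hs -hp polyCN polyCD polyCM; ring.
rewrite e1 /q_ab.
have e3 : (3 : R[i]) = (x1 * x2 * c0)%:C by rewrite hc rmorph_nat.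
have e4 : - (a%:C)%:P = ((-a)%:C)%:P :> {poly R[i]} by rewrite !rmorphN.
rewrite e3 -mulNr e4 R3 R2 R1.
rewrite !(rmorphB, rmorphD, rmorphM, rmorphN) /=.
ring.
Qed.

Lemma relations2 (R : realFieldType) (a b x1 x2 c0 : R) : x1 != x2 -> x1 != 0 -> x2 != 0 ->
  fR a b x1 = 0 -> fR a b x2 = 0 -> x1 * x2 * c0 = 3 ->
  b - 4 = c0 - (x1 + x2) * (a + x1 + x2) + x1 * x2 /\
  - a = x1 * x2 * (a + x1 + x2) - (x1 + x2) * c0.
Proof.
move=> n12 n1 n2 f1 f2 hc.
set c1 := a + x1 + x2.
pose d2 := c0 - (x1 + x2) * c1 + x1 * x2 - (b - 4).
pose d1 := x1 * x2 * c1 - (x1 + x2) * c0 + a.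
have key : forall y, (y - x1) * (y - x2) * (y^+2 + c1 * y + c0) - fR a b y = d2 * y^+2 + d1 * y + (x1 * x2 * c0 - 3).
  by move=> y; rewrite /d2 /d1 /c1 /fR; ring.
have k1 := key x1; have k2 := key x2.
rewrite f1 hc !subrr ?mulr0 ?mul0r ?subr0 ?addr0 in k1.
rewrite f2 hc !subrr ?mulr0 ?mul0r ?subr0 ?addr0 in k2.
have e1 : d2 * x1 + d1 = 0.
  apply/(mulIf n1); rewrite mul0r mulrDl -mulrA -expr2 -k1; by [].
have e2 : d2 * x2 + d1 = 0.
  apply/(mulIf n2); rewrite mul0r mulrDl -mulrA -expr2 -k2; by [].
have hd2 : d2 = 0.
  have : d2 * (x1 - x2) = 0 by rewrite mulrBr; lra.
  move/eqP; rewrite mulf_eq0 => /orP[/eqP //|].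
  by rewrite subr_eq0 (negPf n12).
have hd1 : d1 = 0 by move: e1; rewrite hd2 mul0r add0r.
split.
  by move/eqP: hd2; rewrite subr_eq0 => /eqP <-.
by move/eqP: hd1; rewrite addr_eq0 => /eqP <-.
Qed.

Theorem mainTheorem4 (R : rcfType) (a b : R)
  (ha : 4 < a ^+ 2 < 6) (hb : 4 / 100 < b < 165 / 100) :
  let q := q_ab a b in
  (exists w : R[i], [/\ root q w, `|w| < 1, complex.Im w < 0, simple_root q w &
      forall z : R[i], root q z -> `|z| < 1 -> complex.Im z < 0 -> z = w]) /\
  (exists w : R[i], [/\ root q w, `|w| < 1, complex.Im w > 0, simple_root q w &
      forall z : R[i], root q z -> `|z| < 1 -> complex.Im z > 0 -> z = w]) /\
  (exists x1 x2 : R, [/\ x1 != x2, 1 < `|x1| /\ 1 < `|x2|,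
      root q (x1%:C) /\ simple_root q (x1%:C),
      root q (x2%:C) /\ simple_root q (x2%:C) &
      forall x : R, 1 < `|x| -> root q (x%:C) -> x = x1 \/ x = x2]) /\
  (forall w : R[i], root q w -> `|w| != 1) /\
  (forall x : R, -1 <= x <= 1 -> ~~ root q (x%:C)).
Proof.
move=> q.
have [x1 [x2 [n12 g1 g2 f1 [f2 h12]]]] := roots_real ha hb.
have n1 : x1 != 0 by apply/eqP => e; move: g1; rewrite e normr0; lra.
have n2 : x2 != 0 by apply/eqP => e; move: g2; rewrite e normr0; lra.
have p0 : 0 < x1 * x2 by lra.
pose c0 := 3 / (x1 * x2).
have hc : x1 * x2 * c0 = 3 by rewrite /c0 mulrC mulfVK // gt_eqF.
have c00 : 0 < c0 by rewrite /c0 divr_gt0.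
have c01 : c0 < 1 by rewrite /c0 ltr_pdivrMr //; lra.
move: (ha) (hb) => /andP[_ ha6] /andP[hb1 _].
have hd := disc ha6 hb1 n12 n1 n2 f1 f2 hc (introT andP (conj c00 c01)).
have [R2 R3] := relations2 n12 n1 n2 f1 f2 hc.
set c1 := a + x1 + x2 in hd R2 R3.
have R1 : a = c1 - x1 - x2 by rewrite /c1; ring.
pose u := - c1 / 2.
pose ss := Num.sqrt (c0 - c1^+2 / 4).
have ss0 : 0 < ss by rewrite sqrtr_gt0; lra.
have ss2 : ss^+2 = c0 - c1^+2 / 4 by rewrite sqr_sqrtr //; lra.
pose wp : R[i] := u +i* ss.
pose wm : R[i] := u +i* (- ss).
have hs : wp + wm = - c1%:C.
  by rewrite /wp /wm -complexr0; simpc; congr (_ +i* _); rewrite /u /c1; field.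
have hp : wp * wm = c0%:C.
  rewrite /wp /wm -complexr0; simpc; congr (_ +i* _); last by ring.
  have -> : ss * ss = c0 - c1^+2 / 4 by rewrite -expr2 ss2.
  by rewrite /u; field.
pose s := [:: x1%:C; x2%:C; wp; wm].
have hq : q = \prod_(y <- s) ('X - y%:P) by apply: poly_fact R2 R3 R1 hc hs hp.
have hroot : forall z, root q z = (z \in s) by move=> z; rewrite hq root_prod_XsubC.
have neqIm : forall z w : R[i], complex.Im z != complex.Im w -> z != w.
  by move=> z w; apply: contra => /eqP ->.
have dp : forall x : R, x%:C != wp.
  by move=> x; apply: neqIm; rewrite /= eq_sym gt_eqF.
have dm : forall x : R, x%:C != wm.
  by move=> x; apply: neqIm; rewrite /= eq_sym oppr_eq0 gt_eqF.
have dpm : wp != wm by apply: neqIm => /=; apply/eqP => e; lra.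
have huniq : uniq s.
  by rewrite /s /= !inE !negb_or (inj_eq (@complexI R)) n12 !dp !dm dpm.
have hmup : forall z, z \in s -> simple_root q z.
  by move=> z hz; rewrite /simple_root hq mu_prod_XsubC (count_uniq_mem _ huniq) hz.
have sc0 : Num.sqrt c0 < 1.
  have t0 : 0 <= Num.sqrt c0 by rewrite sqrtr_ge0.
  have t2 : Num.sqrt c0 ^+ 2 = c0 by rewrite sqr_sqrtr // ltW.
  nra.
have one : (1 : R[i]) = 1%:C by [].
have nwp : `|wp| = (Num.sqrt c0)%:C.
  rewrite normC_pair ss2 /u; congr ((Num.sqrt _)%:C); by field.
have nwm : `|wm| = (Num.sqrt c0)%:C.
  rewrite normC_pair sqrrN ss2 /u; congr ((Num.sqrt _)%:C); by field.
have lwp : `|wp| < 1 by rewrite nwp one ltcR.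
have lwm : `|wm| < 1 by rewrite nwm one ltcR.
have inS : forall z, z \in s -> [\/ z = x1%:C, z = x2%:C, z = wp | z = wm].
  by move=> z; rewrite !inE => /or4P [] /eqP ->; [constructor 1|constructor 2|constructor 3|constructor 4].
have memS : (x1%:C \in s) && (x2%:C \in s) && (wp \in s) && (wm \in s).
  by rewrite !inE !eqxx !orbT.
move/andP: memS => [/andP [/andP [m1 m2] mp] mm].
split.
  exists wm; split => //; first by rewrite hroot.
  - by rewrite /= oppr_lt0.
  - exact: hmup.
  move=> z; rewrite hroot => /inS [] -> // _; rewrite /= ?ltxx //.
  by move=> h; move: (lt_trans h ss0); rewrite ltxx.
split.
  exists wp; split => //; first by rewrite hroot.
  - exact: hmup.
  move=> z; rewrite hroot => /inS [] -> // _; rewrite /= ?ltxx //.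
  by rewrite oppr_gt0 => h; move: (lt_trans h ss0); rewrite ltxx.
split.
  exists x1, x2; split => //.
  - by split; [rewrite hroot | apply: hmup].
  - by split; [rewrite hroot | apply: hmup].
  move=> x _; rewrite hroot => /inS [] e.
  - by left; apply: complexI.
  - by right; apply: complexI.
  - by move: (dp x); rewrite e eqxx.
  - by move: (dm x); rewrite e eqxx.
split.
  move=> w; rewrite hroot => /inS [] ->.
  - by rewrite normC_real one (inj_eq (@complexI R)) gt_eqF.
  - by rewrite normC_real one (inj_eq (@complexI R)) gt_eqF.
  - by rewrite nwp one (inj_eq (@complexI R)) lt_eqF.
  - by rewrite nwm one (inj_eq (@complexI R)) lt_eqF.
move=> x hx; rewrite hroot; apply/negP => /inS [] e.
- have ex : x = x1 by apply: complexI.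
  by move: g1; rewrite -ex; move: hx; rewrite -ler_norml => h1 h2; lra.
- have ex : x = x2 by apply: complexI.
  by move: g2; rewrite -ex; move: hx; rewrite -ler_norml => h1 h2; lra.
- by move: (dp x); rewrite e eqxx.
- by move: (dm x); rewrite e eqxx.
Qed.
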